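(* Let $Y$ be a set, $\Lambda$ an index set, and for each $\ell\in\Lambda$ let $\rho_\ell:Y\to Y_\ell$ be a surjective map onto a finite set $Y_\ell$. Let $(X,\mu)$ be a measure space with $\mu(X)<\infty$ and $F:X\to Y$, $x\mapsto F_x$, a map such that each set $\{x\in X\mid \rho_\ell(F_x)=y\}$ is measurable. For each $\ell\in\Lambda$ let $\nu_\ell$ be a probability density on $Y_\ell$ with $\nu_\ell(y)>0$ for all $y$, and let $\mathcal{B}_\ell$ be an orthonormal basis of the space $L^2(Y_\ell)$ of functions on $Y_\ell$ with inner product $\langle f,g\rangle=\sum_y\nu_\ell(y)f(y)\overline{g(y)}$, such that $\mathcal{B}_\ell$ contains the constant function $1$; put $\mathcal{B}_\ell^*=\mathcal{B}_\ell\setminus\{1\}$. For a finite subset $m\subset\Lambda$ let $Y_m=\prod_{\ell\in m}Y_\ell$, $\rho_m=(\rho_\ell)_{\ell\in m}:Y\to Y_m$, and $\mathcal{B}_m^*$ the set of functions $(y_\ell)\mapsto\prod_{\ell\in m}\varphi_\ell(y_\ell)$ with $\varphi_\ell\in\mathcal{B}_\ell^*$ (for $m=\emptyset$, $Y_m$ is a point and $\mathcal{B}_m^*=\{1\}$). Let $\mathcal{L}^*\subset\Lambda$ be finite, let $\mathcal{L}$ be a finite set of finite subsets of $\Lambda$ such that every element of every $m\in\mathcal{L}$ lies in $\mathcal{L}^*$ and $\{\ell\}\in\mathcal{L}$ for every $\ell\in\mathcal{L}^*$, and let $\Delta$ be the smallest non-negative real number such that $$\sum_{m\in\mathcal{L}}\sum_{\varphi\in\mathcal{B}_m^*}\Big|\int_X\alpha(x)\varphi(\rho_m(F_x))\,d\mu(x)\Big|^2\leq\Delta\int_X|\alpha(x)|^2\,d\mu(x)$$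 for every square-integrable $\alpha:X\to\mathbf{C}$. Then for arbitrary subsets $\Omega_\ell\subset Y_\ell$ ($\ell\in\mathcal{L}^*$), the set $S(X,\Omega;\mathcal{L}^* )=\{x\in X\mid \rho_\ell(F_x)\notin\Omega_\ell \text{ for all } \ell\in\mathcal{L}^*\}$ satisfies $$\mu(S(X,\Omega;\mathcal{L}^* ))\leq\Delta H^{-1},\qquad H=\sum_{m\in\mathcal{L}}\prod_{\ell\in m}\frac{\nu_\ell(\Omega_\ell)}{1-\nu_\ell(\Omega_\ell)},$$ where $\nu_\ell(\Omega_\ell)=\sum_{y\in\Omega_\ell}\nu_\ell(y)$. *)

(* Defs.v *)
From HB Require Import structures.
From mathcomp Require Import all_boot all_order all_algebra finmap.
From mathcomp Require Import all_classical all_reals all_analysis.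
From mathcomp Require Import complex.

Set Implicit Arguments.
Unset Strict Implicit.
Unset Printing Implicit Defensive.

Import Order.TTheory GRing.Theory Num.Theory.
Local Open Scope ring_scope.

Definition sqnorm (R : realType) (z : R[i]) : R :=
  complex.Re z ^+ 2 + complex.Im z ^+ 2.

Definition cint (R : realType) (d : measure_display) (X : measurableType d)
  (mu : {measure set X -> \bar R}) (f : X -> R[i]) : R[i] :=
  Complex (Rintegral mu setT (fun x => complex.Re (f x)))
          (Rintegral mu setT (fun x => complex.Im (f x))).

Definition sq_integrable (R : realType) (d : measure_display) (X : measurableType d)
  (mu : {measure set X -> \bar R}) (alpha : X -> R[i]) : Prop :=
  [/\ measurable_fun setT (fun x => complex.Re (alpha x)),
      measurable_fun setT (fun x => complex.Im (alpha x)) &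
      mu.-integrable setT (fun x => (sqnorm (alpha x))%:E)].

Definition l2inner (R : realType) (T : finType) (nu : T -> R) (f g : T -> R[i]) : R[i] :=
  \sum_(y : T) Complex (nu y) 0 * f y * (g y)^*.

Definition nu_of (R : realType) (T : finType) (nu : T -> R) (Om : {set T}) : R :=
  \sum_(y in Om) nu y.

Definition sieve_ratio (R : realType) (t : R) : \bar R :=
  if t == 1 then +oo%E else (t / (1 - t))%:E.

(* Main.v *)
Require Import Defs.
From HB Require Import structures.
From mathcomp Require Import all_boot all_order all_algebra finmap.
From mathcomp Require Import all_classical all_reals all_analysis.
From mathcomp Require Import complex.
From mathcomp Require Import measurable_realfun.
From mathcomp Require Import ring lra.
Import Order.TTheory GRing.Theory Num.Theory.
Local Open Scope ring_scope.
Lemma conjC_cpx (R : realType) (a b : R) : (Complex a b)^* = Complex a (- b).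
Proof. reflexivity. Qed.

Lemma sqnormE (R : realType) (z : R[i]) : (sqnorm z)%:C%C = z * z^*.
Proof. case: z => a b; rewrite conjC_cpx /sqnorm /=. apply/eqP; rewrite eq_complex /=; apply/andP; split; apply/eqP; ring. Qed.

Lemma realC_sum (R : realType) (I : Type) (r : seq I) (g : I -> R) :
  (\sum_(i <- r) g i)%:C%C = \sum_(i <- r) (g i)%:C%C.
Proof. by rewrite rmorph_sum. Qed.

Lemma realC_mul (R : realType) (a b : R) : (a * b)%:C%C = a%:C%C * b%:C%C.
Proof. by rewrite rmorphM. Qed.

Lemma realC_conj (R : realType) (a : R) : (a%:C%C)^* = a%:C%C.
Proof. by rewrite conjC_cpx oppr0. Qed.

Lemma coef_expand (R : realType) (T : finType) (nu : T -> R) (Ib : finType) (b : Ib -> T -> R[i])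
  (b_on : forall i j, l2inner nu (b i) (b j) = (i == j)%:R)
  (b_span : forall h : T -> R[i], exists c : Ib -> R[i], forall y, h y = \sum_i c i * b i y)
  (h : T -> R[i]) : forall y, h y = \sum_i l2inner nu h (b i) * b i y.
Proof.
have [c hc] := b_span h.
have cE j : l2inner nu h (b j) = c j.
  rewrite /l2inner.
  transitivity (\sum_i c i * l2inner nu (b i) (b j)).
    rewrite /l2inner.
    under eq_bigr => y _ do rewrite hc mulr_sumr mulr_suml.
    rewrite exchange_big /=; apply: eq_bigr => i _; rewrite mulr_sumr.
    by apply: eq_bigr => y _; rewrite !mulrA [_ * c i]mulrC.
  rewrite (bigD1 j) //= b_on eqxx mulr1 big1 ?addr0 // => i ij.
  by rewrite b_on (negbTE ij) mulr0.
by move=> y; rewrite hc; apply: eq_bigr => i _; rewrite cE.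
Qed.
Arguments coef_expand {R T nu Ib b} b_on b_span h.

Lemma parseval (R : realType) (T : finType) (nu : T -> R) (Ib : finType) (b : Ib -> T -> R[i])
  (b_on : forall i j, l2inner nu (b i) (b j) = (i == j)%:R)
  (b_span : forall h : T -> R[i], exists c : Ib -> R[i], forall y, h y = \sum_i c i * b i y)
  (h : T -> R[i]) :
  \sum_i l2inner nu h (b i) * (l2inner nu h (b i))^* = l2inner nu h h.
Proof.
have hE := coef_expand b_on b_span h.
transitivity (\sum_y \sum_i Complex (nu y) 0 * (l2inner nu h (b i) * b i y) * (h y)^*).
  rewrite exchange_big /=; apply: eq_bigr => i _.
  rewrite {2}/l2inner rmorph_sum mulr_sumr; apply: eq_bigr => y _.
  rewrite !rmorphM /= conjCK complexr0 realC_conj.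
  by ring.
rewrite [in RHS]/l2inner; apply: eq_bigr => y _.
by rewrite {2}(hE y) mulr_sumr mulr_suml.
Qed.

Lemma l2inner_real (R : realType) (T : finType) (nu : T -> R) (g k : T -> R) :
  l2inner nu (fun y => (g y)%:C%C) (fun y => (k y)%:C%C) = (\sum_y nu y * g y * k y)%:C%C.
Proof.
rewrite /l2inner realC_sum; apply: eq_bigr => y _.
by rewrite realC_conj complexr0 !realC_mul.
Qed.

Lemma sum_indic_nu (R : realType) (T : finType) (nu : T -> R) (Om : {set T}) (k : R) :
  \sum_y nu y * (k * (y \in Om)%:R) = k * nu_of nu Om.
Proof.
rewrite /nu_of mulr_sumr [RHS]big_mkcond /=; apply: eq_bigr => y _.
by case: (y \in Om); rewrite /= ?mulr1 ?mulr0 ?mul1r // mulrC.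
Qed.

Lemma f_ortho1 (R : realType) (T : finType) (nu : T -> R) (Om : {set T})
  (nu1 : \sum_y nu y = 1) :
  l2inner nu (fun y => (nu_of nu Om - (y \in Om)%:R)%:C%C) (fun _ => 1) = 0.
Proof.
rewrite -[fun _ => 1](_ : (fun y : T => (1:R)%:C%C) = _) //.
rewrite l2inner_real.
have -> : \sum_y nu y * (nu_of nu Om - (y \in Om)%:R) * 1 =
   nu_of nu Om * \sum_y nu y - \sum_y nu y * (1 * (y \in Om)%:R).
  rewrite mulr_sumr -sumrB; apply: eq_bigr => y _; ring.
by rewrite sum_indic_nu nu1; apply/eqP; rewrite eq_complex /=; apply/andP; split; apply/eqP; ring.
Qed.

Lemma f_norm (R : realType) (T : finType) (nu : T -> R) (Om : {set T})
  (nu1 : \sum_y nu y = 1) :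
  l2inner nu (fun y => (nu_of nu Om - (y \in Om)%:R)%:C%C) (fun y => (nu_of nu Om - (y \in Om)%:R)%:C%C)
  = (nu_of nu Om * (1 - nu_of nu Om))%:C%C.
Proof.
rewrite l2inner_real; congr (_%:C%C).
set p := nu_of nu Om.
have sq y : (y \in Om)%:R * (y \in Om)%:R = (y \in Om)%:R :> R by case: (y \in Om); rewrite /= ?mulr1 ?mulr0.
have -> : \sum_y nu y * (p - (y \in Om)%:R) * (p - (y \in Om)%:R) =
   p * p * \sum_y nu y + \sum_y nu y * ((1 - 2 * p) * (y \in Om)%:R).
  rewrite mulr_sumr -big_split; apply: eq_bigr => y _.
  have := sq y; set e := (y \in Om)%:R => se.
  have -> : nu y * (p - e) * (p - e) = p * p * nu y + nu y * ((1 - 2 * p) * e) + nu y * (e * e - e) by ring.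
  by rewrite se subrr mulr0 addr0.
by rewrite sum_indic_nu nu1 -/p; ring.
Qed.

Lemma sumC_split (R : realType) (I : Type) (r : seq I) (z : I -> R[i]) :
  \sum_(i <- r) z i = Complex (\sum_(i <- r) complex.Re (z i)) (\sum_(i <- r) complex.Im (z i)).
Proof.
elim: r => [|i r IH]; first by rewrite !big_nil.
by rewrite !big_cons IH; case: (z i).
Qed.

Lemma sqnormM (R : realType) (z w : R[i]) : sqnorm (z * w) = sqnorm z * sqnorm w.
Proof. case: z => a b; case: w => c e; rewrite /sqnorm /=; ring. Qed.

Lemma sqnorm1 (R : realType) : sqnorm (1 : R[i]) = 1.
Proof. by rewrite /sqnorm /= expr0n /= addr0 expr1n. Qed.

Lemma sqnorm_ge0 (R : realType) (z : R[i]) : 0 <= sqnorm z.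
Proof. case: z => a b; rewrite /sqnorm /=; nra. Qed.

Lemma sqnorm_prod (R : realType) (I : Type) (r : seq I) (z : I -> R[i]) :
  sqnorm (\prod_(i <- r) z i) = \prod_(i <- r) sqnorm (z i).
Proof. elim: r => [|i r IH]; rewrite ?big_nil ?sqnorm1 // !big_cons sqnormM IH //. Qed.

Lemma lam_ineq (R : realType) (z w : R[i]) (lam : R) :
  2 * lam * complex.Re (w * z) - lam ^+ 2 * sqnorm w <= sqnorm z.
Proof.
case: z => a b; case: w => c e; rewrite /sqnorm /=.
rewrite -subr_ge0.
have -> : a ^+ 2 + b ^+ 2 - (2 * lam * (c * a - e * b) - lam ^+ 2 * (c ^+ 2 + e ^+ 2)) =
  (a - lam * c) ^+ 2 + (b + lam * e) ^+ 2 by ring.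
by rewrite addr_ge0 // sqr_ge0.
Qed.

Lemma Re_sum (R : realType) (I : Type) (r : seq I) (P : pred I) (z : I -> R[i]) :
  complex.Re (\sum_(i <- r | P i) z i) = \sum_(i <- r | P i) complex.Re (z i).
Proof. by rewrite big_mkcond sumC_split /= [RHS]big_mkcond; apply: eq_bigr => i _; case: (P i). Qed.


Local Open Scope classical_set_scope.
Lemma my_int_indic (R : realType) (d : measure_display) (X : measurableType d)
  (mu : {measure set X -> \bar R}) (mu_fin : (mu setT < +oo)%E) (A : set X) :
  measurable A -> mu.-integrable setT (fun x => (\1_A x)%:E).
Proof.
move=> mA; apply/integrableP; split; first exact/measurable_EFinP/measurable_indic.
rewrite (eq_integral (fun x => (\1_A x)%:E)); last first.
  by move=> t _; rewrite gee0_abs// lee_fin.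
rewrite integral_indic// setIT.
by rewrite (le_lt_trans _ mu_fin) ?le_measure ?inE//.
Qed.

Lemma Rint_sum_indic (R : realType) (d : measure_display) (X : measurableType d)
  (mu : {measure set X -> \bar R}) (mu_fin : (mu setT < +oo)%E)
  (I : Type) (r : seq I) (c : I -> R) (A : I -> set X) :
  (forall i, measurable (A i)) ->
  Rintegral mu setT (fun x => \sum_(i <- r) c i * \1_(A i) x) = \sum_(i <- r) c i * fine (mu (A i))
  /\ mu.-integrable setT (EFin \o (fun x => \sum_(i <- r) c i * \1_(A i) x)).
Proof.
move=> mA; elim: r => [|i r [IH1 IH2]].
  under eq_Rintegral do rewrite big_nil.
  rewrite big_nil Rintegral_cst // mul0r; split => //.
  apply: (eq_integrable measurableT (cst 0%E)) => //; first by move=> x _ /=; rewrite big_nil.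
  exact: integrable0.
have ii : mu.-integrable setT (EFin \o (fun x => c i * \1_(A i) x)).
  apply: (eq_integrable measurableT (fun x => ((c i)%:E * (\1_(A i) x)%:E)%E)) => //.
  exact/integrableZl/my_int_indic.
under eq_Rintegral do rewrite big_cons.
rewrite RintegralD // IH1 big_cons; split.
  congr (_ + _); rewrite RintegralZl //; last first.
    by apply: (eq_integrable measurableT (fun x => (\1_(A i) x)%:E)) => //; exact/my_int_indic.
  by rewrite /Rintegral integral_indic // setIT.
apply: (eq_integrable measurableT ((EFin \o (fun x => c i * \1_(A i) x)) \+ (EFin \o (fun x => \sum_(i <- r) c i * \1_(A i) x)))) => //.
  by move=> x _ /=; rewrite big_cons.
exact: integrableD.
Qed.

Lemma Rint_fin (R : realType) (d : measure_display) (X : measurableType d)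
  (mu : {measure set X -> \bar R}) (mu_fin : (mu setT < +oo)%E)
  (D : finType) (h : X -> D) (hm : forall t, measurable [set x | h x = t]) (G : D -> R) :
  Rintegral mu setT (fun x => G (h x)) = \sum_(t : D) G t * fine (mu [set x | h x = t]).
Proof.
have E x : G (h x) = \sum_(t : D) G t * \1_([set x | h x = t]) x.
  rewrite (bigD1 (h x)) //= indicE mem_set // mulr1 big1 ?addr0 // => t tne.
  rewrite indicE memNset ?mulr0 //= => ht; by rewrite ht eqxx in tne.
under eq_Rintegral do rewrite E.
by have [-> _] := @Rint_sum_indic _ _ _ mu mu_fin _ (index_enum D) G _ hm.
Qed.



Lemma cint_fin (R : realType) (d : measure_display) (X : measurableType d)
  (mu : {measure set X -> \bar R}) (mu_fin : (mu setT < +oo)%E)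
  (D : finType) (h : X -> D) (hm : forall t, measurable [set x | h x = t]) (K : D -> R[i]) :
  cint mu (fun x => K (h x)) = \sum_(t : D) K t * (fine (mu [set x | h x = t]))%:C%C.
Proof.
rewrite /cint (@Rint_fin _ _ _ mu mu_fin _ h hm (fun t => complex.Re (K t))) (@Rint_fin _ _ _ mu mu_fin _ h hm (fun t => complex.Im (K t))).
rewrite sumC_split; congr Complex; apply: eq_bigr => t _; case: (K t) => a b /=; lra.
Qed.

Lemma meas_eq_dffun (d : measure_display) (X : measurableType d)
  (I : finType) (T_ : I -> finType) (g : forall i, X -> T_ i)
  (gm : forall i y, measurable [set x | g i x = y]) (t : {dffun forall i, T_ i}) :
  measurable [set x | (finfun (fun i => g i x) : {dffun forall i, T_ i}) = t].
Proof.
have -> : [set x | (finfun (fun i => g i x) : {dffun forall i, T_ i}) = t] =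
  \bigcap_(i in [set: I]) [set x | g i x = t i].
  apply/seteqP; split => x /=.
    by move=> <- i _; rewrite ffunE.
  by move=> H; apply/ffunP => i; rewrite ffunE; apply: H.
by apply: fin_bigcap_measurable => //; exact: finite_finset.
Qed.

Local Close Scope classical_set_scope.

Lemma big_distr_dffun (R : comPzSemiRingType) (I : finType) (J : I -> finType)
  (j0 : forall i, J i) (F : forall i, J i -> R) :
  \prod_(i : I) \sum_(j : J i) F i j =
  \sum_(f : {dffun forall i, J i}) \prod_(i : I) F i (f i).
Proof.
pose K := {i : I & J i}.
pose F' i (k : K) := F i (tagged_as (Tagged J (j0 i)) k).
have inner i : \sum_(j : J i) F i j = \sum_(k : K | tag k == i) F' i k.
  rewrite (reindex_onto (fun j : J i => Tagged J j) (fun k : K => tagged_as (Tagged J (j0 i)) k)) /=.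
    apply: eq_big => [j|j _]; first by rewrite tagged_asE !eqxx. by rewrite /F' tagged_asE.
  case=> i' k /= /eqP Ei; subst i'; by rewrite tagged_asE.
under eq_bigr do rewrite inner.
rewrite bigA_distr_big_dep.
pose h (f : {dffun forall i, J i}) : {ffun I -> K} := [ffun i => Tagged J (f i)].
pose h' (g : {ffun I -> K}) : {dffun forall i, J i} := [ffun i => tagged_as (Tagged J (j0 i)) (g i)].
rewrite (reindex_onto h h') /=.
  apply: eq_big => [f|f _].
    have -> : h' (h f) == f by apply/eqP/ffunP => i; rewrite !ffunE tagged_asE.
    rewrite andbT; apply/familyP => i; by rewrite /h ffunE unfold_in /=.
  apply: eq_bigr => i _; by rewrite /F' /h ffunE tagged_asE.
move=> g /familyP gP; apply/ffunP => i; rewrite /h /h' !ffunE.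
have := gP i; rewrite unfold_in; case: (g i) => i' k /= /eqP Ei; subst i; by rewrite tagged_asE.
Qed.

Lemma per_m (R : realType) (M : finType) (Y_ I_ : M -> finType) (i0 : forall l, I_ l)
  (c : forall l, I_ l -> R[i]) (bb : forall l, I_ l -> Y_ l -> R[i]) (pp : M -> R)
  (D : finType) (tt : forall l, D -> Y_ l) (inS : D -> bool) (w : D -> R)
  (hexp : forall t, inS t -> forall l, \sum_i c l i * bb l i (tt l t) = (pp l)%:C%C)
  (c0 : forall l, c l (i0 l) = 0)
  (csq : forall l, \sum_i sqnorm (c l i) = pp l * (1 - pp l))
  (pp1 : forall l, pp l < 1) :
  (\sum_t (inS t)%:R * w t) ^+ 2 * \prod_l (pp l / (1 - pp l)) <=
  \sum_(phi : {dffun forall l, I_ l} | [forall l, phi l != i0 l])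
     sqnorm (\sum_t ((inS t)%:R%:C%C * \prod_l bb l (phi l) (tt l t)) * (w t)%:C%C).
Proof.
set s := \sum_t (inS t)%:R * w t.
set P := \prod_l pp l.
set Q := \prod_l (1 - pp l).
have Q0 : 0 < Q by apply: prodr_gt0 => l _; rewrite subr_gt0.
pose C (phi : {dffun forall l, I_ l}) := \prod_l c l (phi l).
pose B (phi : {dffun forall l, I_ l}) t := \prod_l bb l (phi l) (tt l t).
pose I (phi : {dffun forall l, I_ l}) :=
  \sum_t ((inS t)%:R%:C%C * B phi t) * (w t)%:C%C.
pose cond (phi : {dffun forall l, I_ l}) := [forall l, phi l != i0 l].
have Ha : \sum_(phi | cond phi) C phi * I phi = (s * P)%:C%C.
  transitivity (\sum_t ((inS t)%:R%:C%C * (\sum_(phi | cond phi) C phi * B phi t)) * (w t)%:C%C).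
    under eq_bigr do rewrite mulr_sumr.
    rewrite exchange_big /=; apply: eq_bigr => t _.
    rewrite mulr_sumr mulr_suml; apply: eq_bigr => phi _; ring.
  have HB t : inS t -> \sum_(phi | cond phi) C phi * B phi t = P%:C%C.
    move=> St; rewrite /P rmorph_prod /=.
    under [in RHS]eq_bigr => l _ do rewrite -(hexp t St l).
    rewrite (@big_distr_dffun _ _ _ i0) big_mkcond /=; apply: eq_bigr => phi _.
    rewrite big_split /=; case: ifP => // ncond.
    move/negbT/forallPn: ncond => [l /negPn /eqP E].
    by rewrite (bigD1 l) //= E c0 !mul0r.
  rewrite /s mulr_suml realC_sum; apply: eq_bigr => t _.
  case St: (inS t); last by rewrite !mul0r.
  by rewrite HB // !realC_mul; ring.
have Hb : \sum_(phi | cond phi) sqnorm (C phi) <= P * Q.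
  apply: (le_trans (y := \sum_phi sqnorm (C phi))).
    rewrite [X in _ <= X](bigID cond) /= lerDl; apply: sumr_ge0 => phi _; exact: sqnorm_ge0.
  under eq_bigr do rewrite /C sqnorm_prod.
  rewrite -(@big_distr_dffun _ _ _ i0 (fun l i => sqnorm (c l i))).
  under eq_bigr do rewrite csq.
  by rewrite /P /Q -big_split.
set lam := s / Q.
have Hc : \sum_(phi | cond phi) (2 * lam * complex.Re (C phi * I phi) - lam ^+ 2 * sqnorm (C phi))
          <= \sum_(phi | cond phi) sqnorm (I phi).
  by apply: ler_sum => phi _; exact: lam_ineq.
rewrite sumrB -!mulr_sumr -Re_sum Ha /= in Hc.
apply: le_trans Hc.
have -> : s ^+ 2 * \prod_l (pp l / (1 - pp l)) = 2 * lam * (s * P) - lam ^+ 2 * (P * Q).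
  rewrite prodf_div -/P -/Q /lam; field; exact: lt0r_neq0.
rewrite lerD2l lerN2; apply: ler_wpM2l => //; exact: sqr_ge0.
Qed.

Local Open Scope fset_scope.

Lemma int_fin (R : realType) (d : measure_display) (X : measurableType d)
  (mu : {measure set X -> \bar R}) (mu_fin : (mu setT < +oo)%E)
  (D : finType) (h : X -> D) (hm : forall t, measurable [set x | h x = t]%classic) (G : D -> R) :
  mu.-integrable setT (EFin \o (fun x => G (h x))).
Proof.
have E x : G (h x) = \sum_(t : D) G t * \1_([set x | h x = t]%classic) x.
  rewrite (bigD1 (h x)) //= indicE mem_set // mulr1 big1 ?addr0 // => t tne.
  rewrite indicE memNset ?mulr0 //= => ht; by rewrite ht eqxx in tne.
have [_ I2] := @Rint_sum_indic _ _ _ mu mu_fin _ (index_enum D) G _ hm.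
apply: (eq_integrable measurableT _ _ _ I2) => x _ /=; by rewrite E.
Qed.

Lemma meas_fin (R : realType) (d : measure_display) (X : measurableType d)
  (mu : {measure set X -> \bar R}) (mu_fin : (mu setT < +oo)%E)
  (D : finType) (h : X -> D) (hm : forall t, measurable [set x | h x = t]%classic) (G : D -> R) :
  measurable_fun setT (fun x => G (h x)).
Proof.
have /integrableP [m _] := @int_fin _ _ _ mu mu_fin _ h hm G.
exact/measurable_EFinP.
Qed.

Theorem proposition2p4
  (R : realType)
  (Y : Type) (Lam : choiceType)
  (Yl : Lam -> finType) (rho : forall l : Lam, Y -> Yl l)
  (rho_surj : forall (l : Lam) (z : Yl l), exists y : Y, rho l y = z)
  (d : measure_display) (X : measurableType d)
  (mu : {measure set X -> \bar R})
  (mu_fin : (mu setT < +oo)%E)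
  (F : X -> Y)
  (F_meas : forall (l : Lam) (y : Yl l), measurable [set x : X | rho l (F x) = y]%classic)
  (nu : forall l : Lam, Yl l -> R)
  (nu_pos : forall (l : Lam) (y : Yl l), 0 < nu l y)
  (nu_sum1 : forall l : Lam, \sum_(y : Yl l) nu l y = 1)
  (Ib : Lam -> finType) (b : forall l : Lam, Ib l -> Yl l -> R[i])
  (b_orthonormal : forall (l : Lam) (i j : Ib l),
      l2inner (nu l) (b l i) (b l j) = (i == j)%:R)
  (b_span : forall (l : Lam) (h : Yl l -> R[i]),
      exists c : Ib l -> R[i], forall y : Yl l, h y = \sum_(i : Ib l) c i * b l i y)
  (i0 : forall l : Lam, Ib l)
  (b_i0 : forall (l : Lam) (y : Yl l), b l (i0 l) y = 1)
  (Lstar : {fset Lam}) (L : {fset {fset Lam}})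
  (L_sub : forall m : {fset Lam}, m \in L -> m `<=` Lstar)
  (L_single : forall l : Lam, l \in Lstar -> [fset l] \in L)
  (Delta : R)
  (Delta_ge0 : 0 <= Delta)
  (Delta_ineq : forall alpha : X -> R[i], sq_integrable mu alpha ->
      \sum_(m <- L)
        \sum_(phi : {dffun forall l : m, Ib (fsval l)} | [forall l, phi l != i0 (fsval l)])
          sqnorm (cint mu (fun x => alpha x *
                     \prod_(l : m) b (fsval l) (phi l) (rho (fsval l) (F x))))
      <= Delta * Rintegral mu setT (fun x => sqnorm (alpha x)))
  (Delta_min : forall Delta' : R, 0 <= Delta' ->
      (forall alpha : X -> R[i], sq_integrable mu alpha ->
        \sum_(m <- L)
          \sum_(phi : {dffun forall l : m, Ib (fsval l)} | [forall l, phi l != i0 (fsval l)])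
            sqnorm (cint mu (fun x => alpha x *
                       \prod_(l : m) b (fsval l) (phi l) (rho (fsval l) (F x))))
        <= Delta' * Rintegral mu setT (fun x => sqnorm (alpha x))) ->
      Delta <= Delta')
  (Omega : forall l : Lam, {set Yl l}) :
  let S := [set x : X | forall l : Lam, l \in Lstar -> rho l (F x) \notin Omega l]%classic in
  let H := (\sum_(m <- L) \prod_(l <- m) sieve_ratio (nu_of (nu l) (Omega l)))%E in
  (mu S * H <= Delta%:E)%E.
Proof.
cbv zeta.
set S := [set x : X | _]%classic.
set H := (\sum_(m <- L) _)%E.
pose p l := nu_of (nu l) (Omega l).
pose f l (y : Yl l) := (p l - (y \in Omega l)%:R)%:C%C.
pose c l i := l2inner (nu l) (f l) (b l i).
have fexp l y : f l y = \sum_i c l i * b l i y.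
  exact: (coef_expand (b_orthonormal l) (b_span l) (f l) y).
have c0 l : c l (i0 l) = 0.
  rewrite /c; have -> : b l (i0 l) = fun _ => 1 by apply: funext => y; rewrite b_i0.
  exact: f_ortho1.
have csq l : \sum_i sqnorm (c l i) = p l * (1 - p l).
  apply: complexI; rewrite realC_sum.
  under eq_bigr do rewrite sqnormE.
  rewrite (@parseval _ _ _ _ _ (b_orthonormal l) (b_span l)); exact: f_norm.
pose Dt := {dffun forall l : Lstar, Yl (fsval l)}.
pose hL (x : X) : Dt := finfun (fun l : Lstar => rho (fsval l) (F x)).
have hLm t : measurable [set x | hL x = t]%classic.
  exact: (@meas_eq_dffun _ X _ (fun l : Lstar => Yl (fsval l)) (fun l x => rho (fsval l) (F x)) (fun l y => F_meas (fsval l) y) t).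
pose inS (t : Dt) := [forall l : Lstar, t l \notin Omega (fsval l)].
have SE x : S x <-> inS (hL x).
  split => [Sx | /forallP Hx l Hl].
    by apply/forallP => l; rewrite ffunE; apply: Sx; exact: fsvalP.
  by have := Hx [` Hl]; rewrite ffunE.
have mS : measurable S.
  have -> : S = (\bigcup_(t in [set t | inS t]) [set x | hL x = t])%classic.
    apply/seteqP; split => x /=.
      by move=> /SE Sx; exists (hL x).
    by move=> [t /= St Ht]; apply/SE; rewrite Ht.
  by apply: fin_bigcup_measurable => //; exact: finite_finset.
pose w t := fine (mu [set x | hL x = t]%classic).
pose s := \sum_t (inS t)%:R * w t.
have sE : fine (mu S) = s.
  rewrite /s -(@Rint_fin _ _ _ mu mu_fin _ hL hLm (fun t => (inS t)%:R)).
  have -> : (fun x => (inS (hL x))%:R) = \1_S :> (X -> R).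
    apply: funext => x; rewrite indicE; case: (boolP (inS (hL x))) => H1.
      by rewrite mem_set //; apply/SE.
    by rewrite memNset //= => /SE; rewrite (negbTE H1).
  by rewrite /Rintegral integral_indic // setIT.
have muSfin : (mu S < +oo)%E.
  by apply: le_lt_trans mu_fin; apply: le_measure; rewrite ?inE.
have [S0|Sn0] := eqVneq (mu S) 0%E.
  by rewrite S0 mul0e lee_fin.
have [x0 Sx0] : exists x, S x.
  apply/set0P; apply: contra_neq Sn0 => ->; exact: measure0.
have p1 l : l \in Lstar -> p l < 1.
  move=> Hl; have y0n := Sx0 l Hl.
  rewrite /p /nu_of -(nu_sum1 l) [X in _ < X](bigID (fun y => y \in Omega l)) /= ltrDl.
  rewrite (bigD1 (rho l (F x0))) //=.
  have := nu_pos l (rho l (F x0)).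
  have : 0 <= \sum_(i | (i \notin Omega l) && (i != rho l (F x0))) nu l i.
    by apply: sumr_ge0 => i _; exact: ltW.
  move=> h1 h2; exact: ltr_pwDl.
have HE : H = (\sum_(m <- L) \prod_(l : m) (p (fsval l) / (1 - p (fsval l))))%:E.
  rewrite /H -sumEFin big_seq [RHS]big_seq; apply: eq_bigr => m Hm.
  rewrite -prodEFin big_seq_fsetE /=; apply: eq_bigr => l _.
  have Hl : fsval l \in Lstar by apply: (fsubsetP (L_sub m Hm)); exact: fsvalP.
  by rewrite /sieve_ratio (lt_eqF (p1 _ Hl)).
have muSE : mu S = s%:E.
  rewrite -sE fineK // ge0_fin_numE //; exact: measure_ge0.
have s0 : 0 < s.
  rewrite -sE; apply: fine_gt0; rewrite muSfin andbT lt0e Sn0; exact: measure_ge0.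
rewrite muSE HE -EFinM lee_fin.
rewrite -(ler_pM2l s0) mulrA mulr_sumr.
pose alpha (x : X) : R[i] := ((inS (hL x))%:R)%:C%C.
have Ha : sq_integrable mu alpha.
  split.
  - exact: (@meas_fin _ _ _ mu mu_fin _ hL hLm (fun t => (inS t)%:R)).
  - exact: measurable_cst.
  - exact: (@int_fin _ _ _ mu mu_fin _ hL hLm (fun t => sqnorm ((inS t)%:R%:C%C))).
have HD := Delta_ineq alpha Ha.
have Rs : Rintegral mu setT (fun x => sqnorm (alpha x)) = s.
  rewrite (@Rint_fin _ _ _ mu mu_fin _ hL hLm (fun t => sqnorm ((inS t)%:R%:C%C))) /s.
  by apply: eq_bigr => t _; case: (inS t); rewrite /sqnorm /= /w; ring.
rewrite Rs in HD.
rewrite [s * Delta]mulrC; apply: le_trans HD.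
rewrite big_seq [X in _ <= X]big_seq; apply: ler_sum => m Hm.
have inL (l : m) : fsval l \in Lstar by apply: (fsubsetP (L_sub m Hm)); exact: fsvalP.
pose iL (l : m) : Lstar := [` inL l].
have Ecint (phi : {dffun forall l : m, Ib (fsval l)}) :
  cint mu (fun x => alpha x * \prod_(l : m) b (fsval l) (phi l) (rho (fsval l) (F x))) =
  \sum_t (((inS t)%:R)%:C%C * \prod_(l : m) b (fsval l) (phi l) (t (iL l))) * (w t)%:C%C.
  rewrite -(@cint_fin _ _ _ mu mu_fin _ hL hLm (fun t => ((inS t)%:R)%:C%C * \prod_(l : m) b (fsval l) (phi l) (t (iL l)))).
  congr cint; apply: funext => x /=; congr (_ * _); apply: eq_bigr => l _; by rewrite ffunE.
apply: (le_trans (y := \sum_(phi : {dffun forall l : m, Ib (fsval l)} | [forall l, phi l != i0 (fsval l)])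
   sqnorm (\sum_t (((inS t)%:R)%:C%C * \prod_(l : m) b (fsval l) (phi l) (t (iL l))) * (w t)%:C%C))); last first.
  rewrite le_eqVlt; apply/orP; left; apply/eqP; apply: eq_bigr => phi _; congr sqnorm; symmetry; exact: (Ecint phi).
rewrite -expr2.
apply: (@per_m R m (fun l => Yl (fsval l)) (fun l => Ib (fsval l)) (fun l => i0 (fsval l))
  (fun l => c (fsval l)) (fun l => b (fsval l)) (fun l => p (fsval l)) Dt (fun l t => t (iL l)) inS w).
- move=> t St l; rewrite -fexp /f.
  by have := forallP St (iL l); move=> /negbTE ->; rewrite subr0.
- by move=> l; exact: c0.
- by move=> l; exact: csq.
- by move=> l; exact: p1 _ (inL l).
Qed.
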